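(* Let $r\geq 2$ and $n>r^{8}$. Every graph $G$ of order $n$ with $e(G)>t_r(n)$ has an induced subgraph $G'$ of order $n'>(1-1/r^{2})n$ such that either $$K_{r+1}\subseteq G'\quad\text{and}\quad\delta(G')>\left(\frac{r-1}{r}-\frac{1}{r^{2}(r^{2}-1)}\right)n',$$ or $$e(G')>\left(\frac{r-1}{2r}+\frac{1}{r^{4}(r^{2}-1)}\right)(n')^{2}.$$
   Context: All graphs are finite and simple; $e(G)$ is the number of edges and $\delta(G)$ the minimum degree. $T_r(n)$ denotes the Turán graph: the complete $r$-partite graph on $n$ vertices whose $r$ parts have sizes as equal as possible (differing by at most one); $t_r(n)=e(T_r(n))$. $K_{r+1}$ is the complete graph on $r+1$ vertices. *)

(* Defs.v *)
(* A simple graph on a finite vertex type T is a symmetric,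
   irreflexive boolean relation e : rel T. *)
From mathcomp Require Import all_boot all_order all_algebra.
Set Implicit Arguments. Unset Strict Implicit. Unset Printing Implicit Defensive.

Definition induced_edges (T : finType) (e : rel T) (S : {set T}) : {set {set T}} :=
  [set A : {set T} | (A \subset S) &&
     [exists x : T, exists y : T, (A == [set x; y]) && e x y]].

Definition ne_induced (T : finType) (e : rel T) (S : {set T}) : nat :=
  #|induced_edges e S|.

Definition nedges (T : finType) (e : rel T) : nat := ne_induced e [set: T].

Definition deg_in (T : finType) (e : rel T) (S : {set T}) (v : T) : nat :=
  #|[set u in S | e v u]|.

(* delta(G[S]) (equals #|S| = 0 when S is empty) *)
Definition mindeg_in (T : finType) (e : rel T) (S : {set T}) : nat :=
  \big[minn/#|S|]_(v in S) deg_in e S v.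

Definition has_clique_in (T : finType) (e : rel T) (S : {set T}) (k : nat) : Prop :=
  exists K : {set T}, [/\ K \subset S, #|K| = k &
    forall x y, x \in K -> y \in K -> x != y -> e x y].

(* Turan graph T_r(n) on 'I_n: vertex i lies in part (i mod r); parts have
   sizes differing by at most one; edges join vertices in different parts. *)
Definition turan_rel (r n : nat) : rel (ordinal n) :=
  fun i j : ordinal n => (nat_of_ord i %% r != nat_of_ord j %% r)%N.

Definition turan_number (r n : nat) : nat := nedges (@turan_rel r n).

(* Main.v *)
Require Import Defs.
From mathcomp Require Import all_boot all_order all_algebra.
From mathcomp Require Import zify ring lra.
From Stdlib Require Import Lia.
Import Order.TTheory GRing.Theory Num.Theory.
Set Implicit Arguments. Unset Strict Implicit. Unset Printing Implicit Defensive.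

Section Graph.
Variables (T : finType) (e : rel T).
Hypotheses (esym : symmetric e) (eirr : irreflexive e).

Lemma ne0 : ne_induced e set0 = 0.
Proof.
rewrite /ne_induced; apply/eqP; rewrite cards_eq0; apply/eqP/setP => A.
rewrite !inE; apply/negbTE; apply/andP => -[sub /existsP [x /existsP [y /andP [/eqP HA _]]]].
move: sub; rewrite subset0 HA => /eqP/setP/(_ x); rewrite !inE eqxx.
by [].
Qed.

Lemma ne_del (S : {set T}) v : v \in S ->
  ne_induced e S = ne_induced e (S :\ v) + deg_in e S v.
Proof.
move=> vS; rewrite /ne_induced /deg_in.
rewrite -(cardsID [set A : {set T} | v \in A]) addnC; congr (_ + _).
  apply: eq_card => A; rewrite !inE.
  apply/andP/andP => -[H1 H2].
    move: H2 => /andP [sub ex]; split => //.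
    by apply/subsetP => x xA; rewrite !inE (subsetP sub x xA) andbT;
      apply/eqP => xv; move: H1; rewrite -xv xA.
  split.
    by apply/negP => vA; move/subsetP: H1 => /(_ v vA); rewrite !inE eqxx.
  rewrite H2 andbT.
  by apply/subsetP => x xA; move/subsetP: H1 => /(_ x xA); rewrite !inE => /andP [].
rewrite -[RHS](card_in_imset (f := fun u => [set v; u])); last first.
  move=> u u'; rewrite !inE => /andP [_ evu] /andP [_ evu'] /setP /(_ u) H.
  have: u \in [set v; u'] by rewrite -H !inE eqxx orbT.
  rewrite !inE => /orP [/eqP uv|/eqP //].
  by move: evu; rewrite uv eirr.
apply: eq_card => A; rewrite !inE; apply/idP/imsetP.
  move=> /andP [/andP [sub /existsP [x /existsP [y /andP [/eqP HA exy]]]] vA].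
  move: vA; rewrite HA !inE => /orP [/eqP vx | /eqP vy].
    exists y; last by rewrite vx.
    by rewrite inE (subsetP sub y) ?HA ?inE ?eqxx ?orbT // vx.
  exists x; last by rewrite vy setUC.
  by rewrite inE (subsetP sub x) ?HA ?inE ?eqxx // vy esym.
move=> [u]; rewrite inE => /andP [uS evu] ->.
rewrite !inE eqxx andbT; apply/andP; split.
  by apply/subsetP => x; rewrite !inE => /orP [/eqP ->|/eqP ->].
by apply/existsP; exists v; apply/existsP; exists u; rewrite eqxx evu.
Qed.


Lemma greedy (S : {set T}) d r :
  (forall v, v \in S -> d <= deg_in e S v) -> d <= #|S| ->
  r * (#|S| - d) < #|S| -> forall i, i <= r.+1 ->
  exists K : {set T}, [/\ K \subset S, #|K| = i,
    (forall x y, x \in K -> y \in K -> x != y -> e x y) &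
    #|S| <= #|[set u in S | [forall x in K, e x u]]| + i * (#|S| - d)].
Proof.
move=> Hdeg dS Hr; elim=> [|i IH] Hi.
  exists set0; split => //; first by rewrite sub0set.
    by rewrite cards0.
    by move=> x y; rewrite inE.
  rewrite mul0n addn0; apply: subset_leq_card; apply/subsetP => u uS.
  by rewrite inE uS; apply/forallP => x; rewrite inE.
have [K [KS cK Kcl Hc]] := IH (ltnW Hi).
set C := [set u in S | [forall x in K, e x u]] in Hc.
have Cpos : 0 < #|C|.
  have : i * (#|S| - d) <= r * (#|S| - d) by apply: leq_mul.
  lia.
move: Cpos; rewrite card_gt0 => /set0Pn [u uC].
move: (uC); rewrite inE => /andP [uS /forallP uK].
have unK : u \notin K.
  by apply/negP => uK'; move: (uK u); rewrite uK' eirr.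
exists (u |: K); split.
- by rewrite subUset sub1set uS KS.
- by rewrite cardsU1 unK cK.
- move=> x y; rewrite !inE => /orP [/eqP ->|xK] /orP [/eqP ->|yK].
  + by rewrite eqxx.
  + by move=> _; rewrite esym; move: (uK y); rewrite yK.
  + by move=> _; move: (uK x); rewrite xK.
  + exact: Kcl.
- set N := [set w in S | e u w].
  have HN : d <= #|N| by exact: Hdeg.
  have HU : #|C :|: N| <= #|S|.
    by apply: subset_leq_card; rewrite subUset; apply/andP; split;
      apply/subsetP => w; rewrite inE => /andP [].
  have HUI := cardsUI C N.
  have sub : C :&: N \subset [set w in S | [forall x in u |: K, e x w]].
    apply/subsetP => w; rewrite !inE => /andP [/andP [wS /forallP wK] /andP [_ euw]].
    rewrite wS; apply/forallP => x; rewrite !inE.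
    by apply/implyP => /orP [/eqP ->|xK] //; move: (wK x); rewrite xK.
  have := subset_leq_card sub.
  rewrite mulSn.
  lia.
Qed.

End Graph.

Definition tt (r m : nat) : nat := \sum_(j < m) (j - j %/ r).

Lemma ttS r m : tt r m.+1 = tt r m + (m - m %/ r).
Proof. by rewrite /tt big_ord_recr. Qed.

Section Turan.
Variables (T : finType) (e : rel T).
Hypotheses (esym : symmetric e) (eirr : irreflexive e).

Lemma turan r : 0 < r -> forall m (S : {set T}), #|S| = m ->
  tt r m < ne_induced e S -> has_clique_in e S r.+1.
Proof.
move=> r0; elim=> [|m IH] S cS.
  move/eqP: cS; rewrite cards_eq0 => /eqP ->.
  by rewrite ne0.
rewrite ttS => Hlt.
case: (boolP [exists v in S, deg_in e S v <= m - m %/ r]).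
  move=> /existsP [v /andP [vS Hv]].
  have cS' : #|S :\ v| = m by move: cS; rewrite (cardsD1 v S) vS add1n => -[].
  rewrite (ne_del esym eirr vS) in Hlt.
  have [|K [KS cK Kcl]] := IH (S :\ v) cS'.
    lia.
  exists K; split => //; apply: subset_trans KS _; exact: subsetDl.
rewrite negb_exists => /forallP Hall.
have Hd : forall v, v \in S -> (m - m %/ r).+1 <= deg_in e S v.
  by move=> v vS; move: (Hall v); rewrite vS /= ltnNge.
have dm : m %/ r <= m by apply: leq_div.
have := leq_divM m r.
move=> Hdiv.
have [|||K [KS cK Kcl _]] := greedy esym eirr Hd (r := r) _ _ (i := r.+1).
- by rewrite cS ltnS leq_subr.
- clear Hall Hd IH Hlt; rewrite cS; move: dm Hdiv; set q := m %/ r => dm Hdiv.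
  rewrite (_ : m.+1 - (m - q).+1 = q); last by lia.
  rewrite mulnC; lia.
- exact: ltnSn.
by exists K.
Qed.

End Turan.


Lemma card_lt_ord n k : k <= n -> #|[set u : 'I_n | u < k]| = k.
Proof.
move=> kn.
have -> : [set u : 'I_n | u < k] = [set widen_ord kn i | i in [set: 'I_k]].
  apply/setP => u; rewrite !inE; apply/idP/imsetP.
    by move=> uk; exists (Ordinal uk) => //; apply: val_inj.
  by move=> [i _ ->] /=.
rewrite card_imset ?cardsT ?card_ord //.
by move=> i j /(congr1 val) /= h; apply: val_inj.
Qed.

Lemma card_cong n r k :
  #|[set u : 'I_n | (u < k) && (u %% r == k %% r)]| <= k %/ r.
Proof.
set B := [set u : 'I_n | _].
rewrite cardE -(size_map (fun u : 'I_n => u %/ r)) -(size_iota 0 (k %/ r)).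
apply: uniq_leq_size.
  rewrite map_inj_in_uniq ?enum_uniq //.
  move=> u u'; rewrite !mem_enum !inE => /andP [_ /eqP h1] /andP [_ /eqP h2] hq.
  apply: val_inj => /=.
  by rewrite (divn_eq u r) (divn_eq u' r) hq h1 h2.
move=> x /mapP [u]; rewrite mem_enum inE => /andP [uk /eqP h] ->.
rewrite mem_iota add0n leq0n /=.
rewrite ltnNge; apply/negP => Hle.
have := leq_mul Hle (leqnn r).
have eu := divn_eq u r; have ek := divn_eq k r; rewrite h in eu.
move: uk eu ek; set a := u %/ r; set b := k %/ r; set c := k %% r.
move=> uk eu ek; lia.
Qed.

Lemma tt_le_turan r n : tt r n <= turan_number r n.
Proof.
rewrite /turan_number /nedges.
have esym : symmetric ((@turan_rel r n)) by move=> i j; rewrite /turan_rel eq_sym.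
have eirr : irreflexive ((@turan_rel r n)) by move=> i; rewrite /turan_rel eqxx.
suff H : forall k, k <= n -> tt r k <= ne_induced ((@turan_rel r n)) [set u : 'I_n | u < k].
  have := H n (leqnn n).
  by rewrite (_ : [set u : 'I_n | u < n] = setT) //; apply/setP => u; rewrite !inE ltn_ord.
elim=> [|k IH] kn.
  by rewrite /tt big_ord0.
set v := Ordinal kn.
have vS : v \in [set u : 'I_n | u < k.+1] by rewrite inE.
rewrite (ne_del esym eirr vS) ttS.
have -> : [set u : 'I_n | u < k.+1] :\ v = [set u : 'I_n | u < k].
  apply/setP => u; rewrite !inE ltnS leq_eqVlt -val_eqE /=.
  by case: (ltngtP u k).
apply: leq_add; first exact: IH (ltnW kn).
rewrite /deg_in.
set A := [set u : 'I_n | u < k].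
set B := [set u : 'I_n | (u < k) && (u %% r == k %% r)].
have HA : #|A| = k by apply: card_lt_ord; exact: ltnW.
have HB : #|B| <= k %/ r := card_cong n r k.
have HAB : #|A :\: B| <= #|[set u in [set u0 : 'I_n | u0 < k.+1] | (@turan_rel r n) v u]|.
  apply: subset_leq_card; apply/subsetP => u; rewrite !inE /turan_rel /=.
  move=> /andP [h1 h2]; rewrite ltnW //= eq_sym; move: h1; by rewrite h2.
have := cardsID B A.
have : #|A :&: B| <= #|B| by apply: subset_leq_card; exact: subsetIr.
lia.
Qed.

Unset Implicit Arguments.

Lemma mindeg_small (T : finType) (e : rel T) (S : {set T}) (c : rat) :
  (0 < #|S|)%N -> (c < 1)%R ->
  ~~ (c * #|S|%:R < (mindeg_in e S)%:R)%R ->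
  exists2 v, v \in S & ((deg_in e S v)%:R <= c * #|S|%:R)%R.
Proof.
move=> S0 c1 H.
case: (boolP [exists v in S, ((deg_in e S v)%:R <= c * #|S|%:R)%R]).
  by move=> /existsP [v /andP [vS h]]; exists v.
rewrite negb_exists => /forallP Hall; exfalso; move/negP: H; apply.
rewrite /mindeg_in; apply: (big_ind (fun k : nat => c * #|S|%:R < k%:R)%R).
- have : (0 < #|S|%:R :> rat)%R by rewrite ltr0n.
  timeout 20 nra.
- by move=> a b ha hb; rewrite /minn; case: ifP.
- by move=> v vS; move: (Hall v); rewrite vS /= -ltNge.
Qed.


Local Open Scope ring_scope.

Lemma dlow (r M : nat) : (0 < r)%N ->
  (r%:R - 1) / r%:R * M%:R <= (M - M %/ r)%N%:R :> rat.
Proof.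
move=> r0; rewrite natrB ?leq_div //.
have rp : 0 < r%:R :> rat by rewrite ltr0n.
have h : (M %/ r)%:R * r%:R <= M%:R :> rat by rewrite -natrM ler_nat leq_divM.
have : (M %/ r)%:R <= M%:R / r%:R :> rat by rewrite ler_pdivlMr.
have -> : (r%:R - 1) / r%:R * M%:R = M%:R - M%:R / r%:R :> rat.
  by field; rewrite gt_eqF.
lra.
Qed.

Lemma ttlow (r m : nat) : (0 < r)%N ->
  (r%:R - 1) / (2 * r%:R) * m%:R * (m%:R - 1) <= (tt r m)%:R :> rat.
Proof.
move=> r0; elim: m => [|m IH]; first by rewrite mulr0 mul0r.
rewrite ttS natrD.
have := @dlow r m r0.
have -> : (r%:R - 1) / (2 * r%:R) * m.+1%:R * (m.+1%:R - 1) =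
  (r%:R - 1) / (2 * r%:R) * m%:R * (m%:R - 1) + (r%:R - 1) / r%:R * m%:R :> rat.
  rewrite -addn1 natrD; have rp : r%:R != 0 :> rat by rewrite pnatr_eq0 -lt0n.
  by field.
lra.
Qed.

Lemma m_big (x K n m : rat) : 4 <= x -> K * x <= n - 1 ->
  m = n - K -> x ^+ 4 < n -> x ^+ 3 * (x - 1) <= m.
Proof.
move=> x4 h1 hm hn.
have : x ^+ 4 * (x - 1) <= m * x by nra.
move=> h; have xp : 0 < x by lra.
rewrite -(ler_pM2r xp); apply: le_trans h; rewrite exprS; nra.
Qed.
Lemma final_arith (x K n m : rat) : 4 <= x -> K * x <= n - 1 -> n <= K * x + x ->
  m = n - K -> x ^+ 4 < n -> 0 <= K ->
  m ^+ 2 + x ^+ 2 * (x - 1) * m / 2 <= K * x * (m - x * (x - 1)).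
Proof.
move=> x4 h1 h2 hm hn K0.
have e1 : K * (x - 1) <= m by nra.
have e2 : m - x <= K * (x - 1) by nra.
have e3 : x ^+ 3 * (x - 1) <= m.
  have : x ^+ 4 * (x - 1) <= m * x by nra.
  move=> h; have xp : 0 < x by lra.
  rewrite -(ler_pM2r xp); apply: le_trans h; rewrite exprS; nra.
have e4 : x ^+ 3 - 2 <= K.
  have : (x ^+ 3 - 2) * (x - 1) <= K * (x - 1) by nra.
  rewrite ler_pM2r //; lra.
have e5 : x ^+ 3 / 2 + x ^+ 2 / 2 + x <= K.
  apply: le_trans e4; rewrite !exprS expr0; nra.
have e6 : K - x <= K * x - m by nra.
have e7 : m * (K - x) - K * x ^+ 2 * (x - 1) - x ^+ 2 * (x - 1) * m / 2
           <= K * x * (m - x * (x - 1)) - m ^+ 2 - x ^+ 2 * (x - 1) * m / 2.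
  have m0 : 0 <= m by nra.
  have : m * (K - x) <= m * (K * x - m) by apply: ler_wpM2l.
  lra.
have e8 : K * (x - 1) * (K - x - x ^+ 2 * (x - 1) / 2 - x ^+ 2) <=
   m * (K - x) - K * x ^+ 2 * (x - 1) - x ^+ 2 * (x - 1) * m / 2.
  have c0 : 0 <= K - x - x ^+ 2 * (x - 1) / 2 by rewrite !exprS expr0 in e5 *; nra.
  have : K * (x - 1) * (K - x - x ^+ 2 * (x - 1) / 2) <=
         m * (K - x - x ^+ 2 * (x - 1) / 2) by apply: ler_wpM2r.
  nra.
have e9 : 0 <= K * (x - 1) * (K - x - x ^+ 2 * (x - 1) / 2 - x ^+ 2).
  apply: mulr_ge0; first nra.
  rewrite !exprS expr0 in e5 *; nra.
lra.
Qed.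

Lemma right_arith (Rr K m : rat) : 2 <= Rr -> 0 <= m ->
  m ^+ 2 + (Rr ^+ 2) ^+ 2 * (Rr ^+ 2 - 1) * m / 2 <=
     K * Rr ^+ 2 * (m - Rr ^+ 2 * (Rr ^+ 2 - 1)) ->
  ((Rr - 1) / (2 * Rr) + 1 / (Rr ^+ 4 * (Rr ^+ 2 - 1))) * m ^+ 2 <=
  (Rr - 1) / (2 * Rr) * m * (m - 1) + K * (1 / (Rr ^+ 2 * (Rr ^+ 2 - 1)) * m - 1).
Proof.
move=> r2 m0 H.
have R0 : Rr != 0 by rewrite gt_eqF //; lra.
have x1 : Rr ^+ 2 - 1 != 0 by rewrite gt_eqF // subr_gt0; nra.
have dp : 0 < Rr ^+ 4 * (Rr ^+ 2 - 1).
  apply: mulr_gt0; first by apply: exprn_gt0; lra.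
  by rewrite subr_gt0; nra.
set a := (Rr - 1) / (2 * Rr).
have a12 : a <= 1 / 2.
  rewrite /a ler_pdivrMr; last by lra.
  by rewrite mulrC mulrA; lra.
have e : ((Rr - 1) / (2 * Rr) + 1 / (Rr ^+ 4 * (Rr ^+ 2 - 1))) * m ^+ 2 -
  ((Rr - 1) / (2 * Rr) * m * (m - 1) + K * (1 / (Rr ^+ 2 * (Rr ^+ 2 - 1)) * m - 1))
  = (m ^+ 2 + a * m * ((Rr ^+ 2) ^+ 2 * (Rr ^+ 2 - 1)) - K * Rr ^+ 2 * (m - Rr ^+ 2 * (Rr ^+ 2 - 1)))
     / (Rr ^+ 4 * (Rr ^+ 2 - 1)).
  by rewrite /a; field; rewrite x1 R0.
rewrite -subr_le0 e.
rewrite ler_pdivrMr // mul0r.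
have mp : 0 <= m * ((Rr ^+ 2) ^+ 2 * (Rr ^+ 2 - 1)).
  apply: mulr_ge0 => //; apply: mulr_ge0; first by apply: exprn_ge0; nra.
  by rewrite subr_ge0; nra.
have : a * (m * ((Rr ^+ 2) ^+ 2 * (Rr ^+ 2 - 1))) <= 1 / 2 * (m * ((Rr ^+ 2) ^+ 2 * (Rr ^+ 2 - 1))).
  by apply: ler_wpM2r.
rewrite -!mulrA in H *.
lra.
Qed.

Theorem theorem6 (r : nat) (T : finType) (e : rel T) :
  (2 <= r)%N -> (r ^ 8 < #|T|)%N ->
  symmetric e -> irreflexive e ->
  (turan_number r #|T| < nedges e)%N ->
  exists S : {set T},
    ((1 - 1 / (r%:R ^+ 2)) * #|T|%:R < #|S|%:R :> rat)%R /\
    ((has_clique_in e S r.+1 /\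
      (((r%:R - 1) / r%:R - 1 / (r%:R ^+ 2 * (r%:R ^+ 2 - 1))) * #|S|%:R
         < (mindeg_in e S)%:R :> rat)%R)
     \/
     ((((r%:R - 1) / (2 * r%:R) + 1 / (r%:R ^+ 4 * (r%:R ^+ 2 - 1)))
         * (#|S|%:R ^+ 2) < (ne_induced e S)%:R :> rat)%R)).
Proof.
move=> r2 hn esym eirr hT.
have r0 : (0 < r)%N by lia.
set n := #|T| in hn hT *.
set K := (n.-1 %/ r ^ 2)%N.
have r2p : (0 < r ^ 2)%N by rewrite expn_gt0 r0.
have hK1 : (K * r ^ 2 <= n.-1)%N := leq_divM _ _.
have hK2 : (n.-1 < K.+1 * r ^ 2)%N := ltn_ceil _ r2p.
have n0 : (0 < n)%N by lia.
have KleK : (K <= K * r ^ 2)%N by rewrite leq_pmulr.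
have Kn : (K < n)%N by lia.
set Rr : rat := r%:R.
have Rr2 : 2 <= Rr by rewrite /Rr (ler_nat _ 2).
set x : rat := Rr ^+ 2.
have x4 : 4 <= x by rewrite /x; timeout 20 nra.
have hx : x = (r ^ 2)%N%:R by rewrite /x /Rr natrX.
have h1 : K%:R * x <= n%:R - 1.
  rewrite hx -natrM lerBrDr natr1 ler_nat; lia.
have h2 : n%:R <= K%:R * x + x.
  rewrite hx -natrM -natrD ler_nat; lia.
have h8 : x ^+ 4 < n%:R.
  by rewrite hx -natrX ltr_nat -expnM.
set m := (n - K)%N.
have hm : m%:R = n%:R - K%:R :> rat by rewrite natrB // ltnW.
have mb := @m_big x K%:R n%:R m%:R x4 h1 hm h8.
set eps := 1 / (x * (x - 1)).
have xx0 : 0 < x * (x - 1) by timeout 20 nra.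
have eps0 : 0 < eps by rewrite /eps divr_gt0.
set g := eps * m%:R - 1.
have g0 : 0 <= g.
  have : x * (x - 1) <= m%:R by apply: le_trans mb; rewrite /x !exprS expr0; timeout 20 nra.
  rewrite /g subr_ge0 /eps mul1r ler_pdivlMl //; timeout 20 lra.
set c := (Rr - 1) / Rr - eps.
have Rr0 : 0 < Rr by timeout 20 lra.
have c1 : c < 1.
  suff : (Rr - 1) / Rr <= 1 by rewrite /c; timeout 20 lra.
  by rewrite ler_pdivrMr // mul1r; timeout 20 lra.
have proc : forall j, (j <= K)%N ->
  (exists S : {set T}, exists j', [/\ (j' < j)%N, #|S| = (n - j')%N,
      c * #|S|%:R < (mindeg_in e S)%:R &
      (tt r (n - j'))%:R + j'%:R * g < (ne_induced e S)%:R])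
  \/ (exists S : {set T}, #|S| = (n - j)%N /\
      (tt r (n - j))%:R + j%:R * g < (ne_induced e S)%:R).
  elim=> [|j IH] hj.
    right; exists setT; rewrite cardsT subn0 mul0r addr0 ltr_nat; split => //.
    exact: leq_ltn_trans (tt_le_turan r n) hT.
  have [[S [j' [hj' cS P I]]]|[S [cS I]]] := IH (ltnW hj).
    by left; exists S, j'; split => //; apply: ltn_trans hj' _.
  case: (boolP (c * #|S|%:R < (mindeg_in e S)%:R)) => P.
    by left; exists S, j; split.
  have jn : (j < n)%N := ltn_trans hj Kn.
  have S0 : (0 < #|S|)%N by rewrite cS subn_gt0.
  have [v vS hv] := @mindeg_small _ e S c S0 c1 P.
  right; exists (S :\ v).
  have cS' : #|S :\ v| = (n - j.+1)%N.
    by move: cS; rewrite (cardsD1 v S) vS add1n subnS => <-.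
  split => //.
  rewrite (ne_del esym eirr vS) natrD in I.
  have ett : tt r (n - j) = (tt r (n - j.+1) + ((n - j.+1) - (n - j.+1) %/ r))%N.
    by rewrite -ttS -subSn // subSS.
  rewrite ett natrD in I.
  have := @dlow r (n - j.+1) r0.
  set M := (n - j.+1)%N.
  have hM : (M.+1)%:R = n%:R - j%:R :> rat.
    by rewrite /M -subSn // subSS natrB // ltnW.
  have hMK : m%:R <= M.+1%:R :> rat.
    by rewrite ler_nat /M /m -subSn // subSS leq_sub2l // ltnW.
  have hnj : (n - j)%N = M.+1 by rewrite /M -subSn // subSS.
  rewrite cS hnj -natr1 in hv.
  rewrite -natr1 in hMK.
  have hMe : eps * m%:R <= eps * (M%:R + 1) by apply: ler_wpM2l => //; exact: ltW.
  have hr1 : (Rr - 1) / Rr <= 1 by rewrite ler_pdivrMr // mul1r; timeout 20 lra.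
  move=> hd.
  have key : g <= (Rr - 1) / Rr * M%:R - c * (M%:R + 1).
    have -> : (Rr - 1) / Rr * M%:R - c * (M%:R + 1) = eps * (M%:R + 1) - (Rr - 1) / Rr.
      by rewrite /c; ring.
    rewrite /g; timeout 20 lra.
  rewrite -natr1 mulrDl mul1r.
  clear -I hd hv key.
  timeout 20 lra.
have [[S [j' [hj' cS P I]]]|[S [cS I]]] := proc K (leqnn K).
- exists S; split.
  + rewrite cS natrB ?(ltnW (ltn_trans hj' Kn)) //.
    have : j'%:R <= K%:R :> rat by rewrite ler_nat ltnW.
    have : K%:R < n%:R / x.
      by rewrite ltr_pdivlMr; timeout 20 lra.
    rewrite -/Rr -/x mulrBl mul1r mul1r.
    timeout 20 lra.
  + left; split; last by [].
    apply: (turan esym eirr r0 (erefl #|S|)).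
    rewrite -(ltr_nat rat) cS.
    have : 0 <= j'%:R * g by apply: mulr_ge0.
    timeout 20 lra.
- exists S; split.
  + rewrite cS -/m hm.
    have : K%:R < n%:R / x by rewrite ltr_pdivlMr; timeout 20 lra.
    rewrite -/Rr -/x mulrBl mul1r mul1r.
    timeout 20 lra.
  + right; rewrite cS -/m.
    have K0 : 0 <= K%:R :> rat by [].
    have fa := @final_arith x K%:R n%:R m%:R x4 h1 h2 hm h8 K0.
    have m0 : 0 <= m%:R :> rat by [].
    have ra := @right_arith Rr K%:R m%:R Rr2 m0 fa.
    have tl := @ttlow r m r0.
    rewrite -/Rr in ra tl *.
    apply: le_lt_trans ra _.
    apply: le_lt_trans I.
    by rewrite lerD2r.
Qed.
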